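(* Let $D\ge 1$. The underlying block design $\mathcal{F}$ of any $(T,N,D)$-tropical code is $(D-1)$-uniquely-disjunct.
   Context: Tropical arithmetic on $\mathbb{R}\cup\{\infty\}$: $x\oplus y=\min(x,y)$, $x\odot y=x+y$, with $x\oplus\infty=x$ and $x\odot\infty=\infty$. For a matrix $S$ with $T$ rows and $N$ columns and a column vector $\mathbf{x}$ of length $N$, $S\odot\mathbf{x}$ is the vector whose $t$-th entry is $\min_{j}(S_{tj}+x_j)$. A $(T,N,D)$-tropical code is a matrix $S\in(\{0\}\cup\mathbb{N}\cup\{\infty\})^{T\times N}$ such that for any two distinct vectors $\mathbf{x},\mathbf{y}\in(\{0\}\cup\mathbb{N}\cup\{\infty\})^{N}$, each having at most $D$ finite entries, $S\odot\mathbf{x}\ne S\odot\mathbf{y}$. The underlying block design of $S$ is the multiset $\mathcal{F}=\{\{t\in[T]: S_{tj}<\infty\}: j\in[N]\}$ (one block per column, so $|\mathcal{F}|=N$); ''distinct blocks'' means blocks coming from distinct columns (they may coincide as sets). $\mathcal{F}$ is $m$-disjunct if $|Z\setminus(B_1\cup\dots\cup B_m)|\ge 1$ for all distinct blocks $Z,B_1,\dots,B_m\in\mathcal{F}$. $\mathcal{F}$ is $m$-uniquely-disjunct if it is $m$-disjunct and, for every $t\in[T]$ and all distinct blocks $B_1,\dots,B_m\in\mathcal{F}$, at most one block $Z\in\mathcal{F}$ (other than the $B_i$, counted by column) satisfies $Z\setminus(B_1\cup\dots\cup B_m)=\{t\}$. *)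

(* Defs.v *)
(* Tropical semiring on N ∪ {∞} modelled as [option nat],
   with [None] = ∞ and [Some n] = n. *)
From mathcomp Require Import all_boot.
Set Implicit Arguments. Unset Strict Implicit. Unset Printing Implicit Defensive.

Definition tadd (x y : option nat) : option nat :=
  match x, y with
  | None, _ => y
  | _, None => x
  | Some a, Some b => Some (minn a b)
  end.

Definition tmul (x y : option nat) : option nat :=
  match x, y with
  | Some a, Some b => Some (a + b)
  | _, _ => None
  end.

Definition tmv (T N : nat) (S : 'I_T -> 'I_N -> option nat)
    (x : {ffun 'I_N -> option nat}) : {ffun 'I_T -> option nat} :=
  [ffun t => foldr (fun j acc => tadd (tmul (S t j) (x j)) acc) None (enum 'I_N)].

Definition fin_supp (N : nat) (x : {ffun 'I_N -> option nat}) : {set 'I_N} :=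
  [set j | x j != None].

Definition tropical_code (T N D : nat) (S : 'I_T -> 'I_N -> option nat) : Prop :=
  forall x y : {ffun 'I_N -> option nat},
    #|fin_supp x| <= D -> #|fin_supp y| <= D -> x != y -> tmv S x != tmv S y.

Definition block (T N : nat) (S : 'I_T -> 'I_N -> option nat) (j : 'I_N) : {set 'I_T} :=
  [set t | S t j != None].

Definition blocks_union (T N : nat) (S : 'I_T -> 'I_N -> option nat) (Bs : {set 'I_N})
  : {set 'I_T} := \bigcup_(j in Bs) block S j.

Definition disjunct (T N : nat) (S : 'I_T -> 'I_N -> option nat) (m : nat) : Prop :=
  forall (z : 'I_N) (Bs : {set 'I_N}), #|Bs| = m -> z \notin Bs ->
    1 <= #|block S z :\: blocks_union S Bs|.

Definition uniquely_disjunct (T N : nat) (S : 'I_T -> 'I_N -> option nat) (m : nat)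
  : Prop :=
  disjunct S m /\
  forall (t : 'I_T) (Bs : {set 'I_N}), #|Bs| = m ->
    forall z z' : 'I_N, z \notin Bs -> z' \notin Bs ->
      block S z :\: blocks_union S Bs = [set t] ->
      block S z' :\: blocks_union S Bs = [set t] ->
      z = z'.

(* Main.v *)
Require Import Defs.
From mathcomp Require Import all_boot.
From HB Require Import structures.
Set Implicit Arguments. Unset Strict Implicit. Unset Printing Implicit Defensive.

Lemma taddA : associative tadd.
Proof. by case=> [a|] [b|] [c|] //=; rewrite minnA. Qed.
Lemma taddC : commutative tadd.
Proof. by case=> [a|] [b|] //=; rewrite minnC. Qed.
Lemma tadd0 : left_id None tadd.
Proof. by case. Qed.

HB.instance Definition _ := Monoid.isComLaw.Build (option nat) None tadd taddA taddC tadd0.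

Lemma tmvE T N (S : 'I_T -> 'I_N -> option nat) x t :
  tmv S x t = \big[tadd/None]_(j : 'I_N) tmul (S t j) (x j).
Proof.
rewrite ffunE -big_enum /=. rewrite unlock /=.
by elim: (enum 'I_N) => //= a s ->.
Qed.

Definition vec N (Bs : {set 'I_N}) (z : 'I_N) (v : option nat)
  : {ffun 'I_N -> option nat} :=
  [ffun j => if j \in Bs then Some 0 else if j == z then v else None].

Lemma tmulN0 s : tmul s None = None. Proof. by case: s. Qed.
Lemma tmul0 s : tmul s (Some 0) = s. Proof. by case: s => //= a; rewrite addn0. Qed.

Lemma tmv_vec T N (S : 'I_T -> 'I_N -> option nat) (Bs : {set 'I_N}) z v t :
  z \notin Bs ->
  tmv S (vec Bs z v) t = tadd (tmul (S t z) v) (\big[tadd/None]_(j in Bs) S t j).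
Proof.
move=> zB; rewrite tmvE (bigD1 z) //= ffunE (negbTE zB) eqxx; congr tadd.
rewrite big_mkcond [RHS]big_mkcond; apply: eq_bigr => j _ /=.
rewrite ffunE; case jB: (j \in Bs).
  have jz : (j == z) = false by apply/eqP => E; rewrite -E jB in zB.
  by rewrite jz /= tmul0.
by case: (j == z) => //=; rewrite tmulN0.
Qed.

Lemma supp_vec N (Bs : {set 'I_N}) z v : z \notin Bs ->
  fin_supp (vec Bs z v) = if v is Some _ then z |: Bs else Bs.
Proof.
move=> zB; apply/setP => j; rewrite !inE ffunE.
case: v => [a|]; case: (j =P z) => [->|ne] /=; rewrite ?(negbTE zB) //=.
- by rewrite setU11.
- by rewrite in_setU1 (introF eqP ne) /=; case: (j \in Bs).
- by case: (j \in Bs).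
Qed.

Section Main.
Variables (T N : nat) (S : 'I_T -> 'I_N -> option nat).

Definition MM := \max_(t : 'I_T) \max_(j : 'I_N) odflt 0 (S t j).

Lemma le_MM t j s : S t j = Some s -> s <= MM.
Proof.
move=> E; apply: leq_trans (leq_bigmax t).
by apply: leq_trans (leq_bigmax j); rewrite E.
Qed.

Definition UU (Bs : {set 'I_N}) t := \big[tadd/None]_(j in Bs) S t j.

Lemma UU_le Bs t u : UU Bs t = Some u -> u <= MM.
Proof.
move: u; rewrite /UU; apply: (big_ind (fun o => forall u, o = Some u -> u <= MM)) => //.
  move=> [a|] [b|] Ha Hb w //= [<-].
  - by rewrite geq_min Ha.
  - by apply: Ha.
  - by apply: Hb.
by move=> j _; apply: le_MM.
Qed.

Lemma UU_in Bs t : t \in blocks_union S Bs -> exists u, UU Bs t = Some u.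
Proof.
case/bigcupP => j jB; rewrite inE /UU (bigD1 j) //=.
case: (S t j) => // a _.
by case: (\big[tadd/None]_(i in Bs | i != j) S t i) => [b|] /=; eexists.
Qed.

Lemma UU_out Bs t : t \notin blocks_union S Bs -> UU Bs t = None.
Proof.
move=> H; rewrite /UU big1 // => j jB.
apply/eqP; apply: contraNT H => Hj; apply/bigcupP; exists j => //.
by rewrite inE.
Qed.

Lemma absorb Bs z t v : MM <= v ->
  (t \in block S z -> t \in blocks_union S Bs) ->
  tadd (tmul (S t z) (Some v)) (UU Bs t) = UU Bs t.
Proof.
move=> Hv Hb; case E: (S t z) => [s|] //=.
have [u Hu] : exists u, UU Bs t = Some u by apply: UU_in; apply: Hb; rewrite inE E.
rewrite Hu /=; congr Some; apply/minn_idPr.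
by apply: leq_trans (UU_le Hu) _; apply: leq_trans Hv _; apply: leq_addl.
Qed.

End Main.

Theorem mainTheorem10 (T N D : nat) (S : 'I_T -> 'I_N -> option nat) :
  1 <= D -> tropical_code D S -> uniquely_disjunct S (D - 1).
Proof.
move=> D1 TC.
have cU (Bs : {set 'I_N}) z : #|Bs| = D - 1 -> z \notin Bs -> #|z |: Bs| <= D.
  by move=> cB zB; rewrite cardsU1 zB cB add1n subn1 prednK.
split.
  move=> z Bs cB zB; rewrite lt0n; apply/negP => /eqP /cards0_eq E.
  have sub t : t \in block S z -> t \in blocks_union S Bs.
    move=> tz; apply/negPn/negP => tU.
    have : t \in block S z :\: blocks_union S Bs by rewrite inE tU tz.
    by rewrite E inE.
  have := TC (vec Bs z None) (vec Bs z (Some (MM S))).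
  rewrite !supp_vec // cB leq_subr cU //.
  have -> : vec Bs z None != vec Bs z (Some (MM S)).
    by apply/eqP => /ffunP/(_ z); rewrite !ffunE (negbTE zB) eqxx.
  move=> /(_ isT isT isT) /eqP; apply; apply/ffunP => t.
  rewrite !tmv_vec // tmulN0 tadd0.
  by rewrite [RHS](absorb (Bs:=Bs)) //; apply: sub.
move=> t0 Bs cB z z' zB z'B Ez Ez'.
case: (eqVneq z z') => // nz.
have key y : block S y :\: blocks_union S Bs = [set t0] ->
   (t0 \notin blocks_union S Bs) /\ (exists s, S t0 y = Some s) /\
   (forall t, t != t0 -> t \in block S y -> t \in blocks_union S Bs).
  move=> Ey; have : t0 \in [set t0] by rewrite set11.
  rewrite -Ey inE => /andP[t0U t0y]; split => //; split.
    by move: t0y; rewrite inE; case: (S t0 y) => [s|] // _; exists s.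
  move=> t nt ty; apply/negPn/negP => tU.
  have : t \in [set t0] by rewrite -Ey inE tU ty.
  by rewrite inE (negbTE nt).
have [t0U [[sz Sz] Hz]] := key z Ez.
have [_ [[sz' Sz'] Hz']] := key z' Ez'.
have := TC (vec Bs z (Some (MM S + sz'))) (vec Bs z' (Some (MM S + sz))).
rewrite !supp_vec // !cU //.
have -> : vec Bs z (Some (MM S + sz')) != vec Bs z' (Some (MM S + sz)).
  apply/eqP => /ffunP/(_ z); rewrite !ffunE (negbTE zB) eqxx.
  by rewrite (negbTE nz).
move=> /(_ isT isT isT) /eqP; elim; apply/ffunP => t.
rewrite !tmv_vec //.
case: (eqVneq t t0) => [->|nt].
  have := UU_out t0U; rewrite /UU => ->; rewrite Sz Sz' /=; congr Some.
  by rewrite [LHS]addnC [RHS]addnC -!addnA (addnC sz').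
rewrite (absorb (Bs:=Bs)) ?leq_addr //; last by apply: Hz.
rewrite [RHS](absorb (Bs:=Bs)) ?leq_addr //; by apply: Hz'.
Qed.
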